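(* If $Y$ is a finite connected simple undirected graph on $n$ vertices, then $\kappa(Y)\leq\tfrac1n\,\alpha(Y)$.
   Context: $\alpha(Y)$ is the number of acyclic orientations of $Y$. A click at a vertex $x$ that is a source of an orientation reverses all edges incident to $x$, making $x$ a sink. Two acyclic orientations are $\kappa$-equivalent if one can be transformed into the other by a finite sequence of clicks; $\kappa(Y)$ is the number of $\kappa$-equivalence classes. *)

(* Defs.v *)
From mathcomp Require Import all_boot all_algebra.
Set Implicit Arguments. Unset Strict Implicit. Unset Printing Implicit Defensive.

Section Orientations.
Variables (T : finType) (e : rel T).

Definition simple_graph := symmetric e /\ irreflexive e.
Definition connected_graph := (0 < #|T|)%N /\ forall x y : T, connect e x y.

Definition is_orientation (A : {set T * T}) : bool :=
  [forall x : T, forall y : T,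
     (((x, y) \in A) ==> e x y) &&
     (e x y ==> (((x, y) \in A) (+) ((y, x) \in A)))].

Definition arc (A : {set T * T}) : rel T := fun x y => (x, y) \in A.

Definition acyclic_orientation (A : {set T * T}) : bool :=
  is_orientation A &&
  [forall x : T, forall y : T, ((x, y) \in A) ==> ~~ connect (arc A) y x].

Definition alpha : nat := #|[set A : {set T * T} | acyclic_orientation A]|.

Definition is_source (A : {set T * T}) (x : T) : bool :=
  [forall y : T, (y, x) \notin A].

Definition click (A : {set T * T}) (x : T) : {set T * T} :=
  [set p : T * T | if (p.1 == x) || (p.2 == x) then (p.2, p.1) \in A
                   else p \in A].

Definition click_step (A B : {set T * T}) : bool :=
  acyclic_orientation A &&
  [exists x : T, is_source A x && (B == click A x)].

Definition kappa_rel (A B : {set T * T}) : bool :=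
  click_step A B || click_step B A.

Definition kappa : nat :=
  n_comp kappa_rel [pred A : {set T * T} | acyclic_orientation A].

End Orientations.

(* Main.v *)
Require Import Defs.
From mathcomp Require Import all_boot all_algebra.
Import GRing.Theory Num.Theory.
Set Implicit Arguments. Unset Strict Implicit. Unset Printing Implicit Defensive.

Section Pf.
Variables (T : finType) (e : rel T).
Hypothesis Hs : simple_graph e.

Definition flip (A : {set T * T}) (U : {set T}) : {set T * T} :=
  [set p : T * T | if (p.1 \in U) != (p.2 \in U) then (p.2, p.1) \in A else p \in A].

Lemma click_flip A x : click A x = flip A [set x].
Proof.
apply/setP => [[a b]]; rewrite !inE /=.
by case: (eqVneq a x) => [->|]; case: (eqVneq b x) => [->|] //=.
Qed.

Lemma flip0 A : flip A set0 = A.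
Proof. by apply/setP => [[a b]]; rewrite !inE. Qed.

Lemma flip_click A (U : {set T}) x : x \in U -> flip (flip A [set x]) (U :\ x) = flip A U.
Proof.
move=> xU; apply/setP => [[a b]]; rewrite !inE /=.
case: (eqVneq a x) => [->|ax]; case: (eqVneq b x) => [->|bx] //=; rewrite ?xU //=.
- by case: (b \in U).
- by case: (a \in U).
Qed.

Lemma orientP A : is_orientation e A -> forall a b,
  ((a, b) \in A -> e a b) /\ (e a b -> ((a, b) \in A) (+) ((b, a) \in A)).
Proof.
move=> /forallP H a b; have /forallP/(_ b)/andP[H1 H2] := H a.
by split; [apply/implyP | apply/implyP].
Qed.

Lemma flip_orient A (U : {set T}) : is_orientation e A -> is_orientation e (flip A U).
Proof.
move=> H; have HP := orientP H.
apply/forallP=> a; apply/forallP=> b; rewrite !inE /=.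
have [H1 H2] := HP a b; have [H3 H4] := HP b a.
have es : e b a = e a b by case: Hs => s _; rewrite s.
rewrite (eq_sym (b \in U)).
case: ifP => _; apply/andP; split; apply/implyP => //.
- by move/H3; rewrite es.
- by move/H2; rewrite addbC.
Qed.

Lemma acycP A : acyclic_orientation e A -> forall a b, (a, b) \in A -> ~~ connect (Defs.arc A) b a.
Proof.
by case/andP=> _ /forallP H a b; have /forallP/(_ b)/implyP := H a.
Qed.

Lemma click_acyclic A x : acyclic_orientation e A -> is_source A x ->
  acyclic_orientation e (click A x).
Proof.
move=> HA /forallP src.
have sink : forall z, (x, z) \notin click A x.
  by move=> z; rewrite inE /= eqxx /= src.
have step : forall y z, (y, z) \in click A x -> z != x -> (y, z) \in A.
  move=> y z yz zx; case: (eqVneq y x) => [eyx|yx].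
    by move: yz; rewrite eyx (negbTE (sink z)).
  by move: yz; rewrite inE /= (negbTE yx) (negbTE zx).
have pth : forall p b, path (Defs.arc (click A x)) b p -> last b p != x -> path (Defs.arc A) b p.
  elim=> [|c p IH] b //= /andP[bc pc] lx.
  have cx : c != x.
    apply/eqP=> cx; move: pc lx; rewrite cx; case: p {IH} => [|d p] /=.
      by rewrite eqxx.
    by rewrite /Defs.arc (negbTE (sink d)).
  by rewrite /Defs.arc (step _ _ bc cx) IH.
apply/andP; split; first by case/andP: HA => H _; rewrite click_flip; apply: flip_orient.
apply/forallP=> a; apply/forallP=> b; apply/implyP=> ab; apply/negP=> /connectP[p pp ap].
have ax : a != x by apply/eqP=> ax; move: ab; rewrite ax (negbTE (sink b)).
have bx : b != x.
  apply/eqP=> bx; move: pp ap; rewrite bx; case: p => [|d p] /=.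
    by move=> _ ax'; rewrite ax' eqxx in ax.
  by rewrite /Defs.arc (negbTE (sink d)).
have := acycP HA (step _ _ ab bx); apply/negP/negPn/connectP.
exists p => //; apply: pth => //; by rewrite -ap.
Qed.


Notation K := (kappa_rel e).
Notation acyc := (acyclic_orientation e).

Lemma kappa_acyc A B : K A B -> acyc A /\ acyc B.
Proof.
case/orP=> /andP[HA /existsP[x /andP[sx /eqP ->]]]; split => //;
  exact: click_acyclic.
Qed.

Lemma connect_acyc A B : connect K A B -> acyc A -> acyc B.
Proof.
have cl : closed K acyc.
  by move=> x y /kappa_acyc[H1 H2]; rewrite /in_mem /= H1 H2.
by move=> c HA; have := closed_connect cl c; rewrite /in_mem /= HA => <-.
Qed.

Lemma exists_source A (U : {set T}) : acyc A -> U != set0 ->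
  exists2 x, x \in U & forall y, y \in U -> ~~ Defs.arc A y x.
Proof.
move=> HA /set0Pn[x0 x0U].
pose anc z := #|[set y | connect (Defs.arc A) y z]|.
case: (arg_minnP anc x0U) => x xU xmin; exists x => // y yU.
apply/negP => ayx; have := xmin y yU; apply/negP; rewrite -ltnNge.
apply: proper_card; apply/properP; split.
  apply/subsetP=> z; rewrite !inE => zy; exact: connect_trans zy (connect1 ayx).
exists x; first by rewrite inE connect0.
by rewrite inE; apply: acycP HA _ _ ayx.
Qed.

Lemma flip_equiv n : forall (U : {set T}) A, #|U| = n -> acyc A ->
  (forall y z, Defs.arc A y z -> z \in U -> y \in U) -> connect K A (flip A U).
Proof.
elim: n => [|n IH] U A cU HA Hin.
  by rewrite (cards0_eq cU) flip0 connect0.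
have U0 : U != set0 by apply/set0Pn; apply/card_gt0P; rewrite cU.
have [x xU xsrc] := exists_source HA U0.
have src : is_source A x.
  apply/forallP=> y; apply/negP=> yx; have yU := Hin _ _ yx xU.
  by move: (xsrc y yU); rewrite /Defs.arc yx.
have HA' := click_acyclic HA src.
have step : K A (click A x).
  apply/orP; left; rewrite /click_step HA /=; apply/existsP; exists x.
  by rewrite src eqxx.
have H : connect K (click A x) (flip A U).
  rewrite click_flip -(flip_click A xU) -click_flip; apply: IH => //.
  - by move: cU; rewrite (cardsD1 x) xU => -[].
  move=> y z; rewrite /Defs.arc inE /= !inE => yz /andP[zx zU].
  have yx : y != x.
    apply/eqP=> eyx; move: yz; rewrite eyx eqxx /=.
    by move: (forallP src z) => /negbTE ->.
  rewrite yx /=; apply: (Hin y z) => //.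
  by move: yz; rewrite (negbTE yx) (negbTE zx) /=.
exact: connect_trans (connect1 step) H.
Qed.


Lemma crossing (U : {set T}) p x : path e x p -> x \notin U -> last x p \in U ->
  exists y z, [/\ e y z, y \notin U & z \in U].
Proof.
elim: p x => [|c p IH] x /=; first by move=> _ /negbTE ->.
case/andP=> xc pc xU lU; case: (boolP (c \in U)) => cU.
  by exists x, c.
exact: (IH c pc cU lU).
Qed.

Lemma path_keep A B (R : {pred T}) p x :
  (forall y z, y \in R -> z \in R -> Defs.arc A y z -> Defs.arc B y z) ->
  (forall y z, y \in R -> Defs.arc A y z -> z \in R) ->
  x \in R -> path (Defs.arc A) x p -> path (Defs.arc B) x p.
Proof.
move=> HAB Hcl; elim: p x => [|c p IH] x //= xR /andP[xc pc].
have cR := Hcl _ _ xR xc.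
by rewrite (HAB _ _ xR cR xc) IH.
Qed.

Lemma reach_all (Hc : connected_graph e) v m : forall A,
  #|[set w | ~~ connect (Defs.arc A) v w]| <= m -> acyc A ->
  exists2 B, connect K A B & acyc B /\ forall w, connect (Defs.arc B) v w.
Proof.
elim: m => [|m IH] A cU HA.
  exists A => //; split => // w; apply/negPn/negP => nw.
  by move: cU; rewrite leqn0 => /eqP/cards0_eq/setP/(_ w); rewrite !inE nw.
set U := [set w | ~~ connect (Defs.arc A) v w] in cU.
case: (eqVneq U set0) => [U0|U0].
  exists A => //; split => // w; apply/negPn/negP => nw.
  by move/setP: U0 => /(_ w); rewrite !inE nw.
have Hin : forall y z, Defs.arc A y z -> z \in U -> y \in U.
  move=> y z yz; rewrite !inE; apply: contra => vy.
  exact: connect_trans vy (connect1 yz).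
have c1 := flip_equiv (erefl #|U|) HA Hin.
have HB := connect_acyc c1 HA.
set B := flip A U in c1 HB.
have keep : forall w, connect (Defs.arc A) v w -> connect (Defs.arc B) v w.
  move=> w /connectP[p pp ->]; apply/connectP; exists p => //.
  apply: (@path_keep A B [pred w | connect (Defs.arc A) v w]) pp => //=.
  - move=> y z vy vz yz; rewrite !inE /= in vy vz; rewrite /Defs.arc /B inE /= !inE vy vz /=; exact: yz.
  - by move=> y z vy yz; rewrite !inE /= in vy *; exact: connect_trans vy (connect1 yz).
  - by rewrite !inE /= connect0.
have [z0 z0U] := set0Pn _ U0.
have /connectP[p pp lp] := Hc.2 v z0.
have vU : v \notin U by rewrite inE negbK connect0.
have lU : last v p \in U by rewrite -lp.
have [y [z [yz yU zU]]] := crossing pp vU lU.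
have zy : (z, y) \in A.
  case/andP: HA => HO _; have [_ H2] := orientP HO y z.
  move: (H2 yz); move: yU zU; rewrite !inE negbK => vy vz.
  case: (boolP ((y, z) \in A)) => //= yzA.
  by move: vz; rewrite (connect_trans vy (connect1 (yzA : Defs.arc A y z))).
have Bz : connect (Defs.arc B) v z.
  apply: connect_trans (keep y _) (connect1 _); first by move: yU; rewrite inE negbK.
  by rewrite /Defs.arc /B inE /= (negbTE yU) zU /=.
have cB : #|[set w | ~~ connect (Defs.arc B) v w]| <= m.
  rewrite -ltnS; apply: leq_trans cU; apply: proper_card; apply/properP; split.
    by apply/subsetP=> w; rewrite !inE; apply: contra; exact: keep.
  by exists z => //; rewrite inE Bz.
have [B' c2 HB'] := IH B cB HB.
by exists B' => //; exact: connect_trans c1 c2.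
Qed.

Lemma uniq_source A v w : acyc A -> (forall u, connect (Defs.arc A) v u) ->
  (forall u, connect (Defs.arc A) w u) -> v = w.
Proof.
move=> HA Hv Hw; apply/eqP/negPn/negP => vw.
have /connectP[p pp lp] := Hv w.
case/lastP: p pp lp => [|p u] /=; first by move=> _ wv; rewrite wv eqxx in vw.
rewrite rcons_path last_rcons => /andP[_ a] wu; rewrite -wu in a.
by have := acycP HA a; rewrite Hw.
Qed.


Lemma Ksym : connect_sym K.
Proof. by apply: sym_connect_sym => A B; rewrite /kappa_rel orbC. Qed.

Lemma fiber_big (Hc : connected_graph e) r : acyc r -> fingraph.root K r = r ->
  #|T| <= #|[set A | acyc A & fingraph.root K A == r]|.
Proof.
move=> Hr rr.
pose Q v B := connect K r B && acyc B && [forall w, connect (Defs.arc B) v w].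
pose f v := odflt r [pick B | Q v B].
have fP : forall v, Q v (f v).
  move=> v; rewrite /f; case: pickP => [B //|none] /=.
  have [B c1 [HB Hall]] := reach_all (v:=v) Hc (leqnn _) Hr.
  by move: (none B); rewrite /Q c1 HB /=; move/negbT/negP; case; apply/forallP.
have finj : injective f.
  move=> v w fvw; have := fP v; have := fP w; rewrite /Q -fvw.
  case/andP=> /andP[_ HB] /forallP Hw /andP[_ /forallP Hv].
  exact: uniq_source HB Hv Hw.
rewrite -(card_imset _ finj); apply: subset_leq_card; apply/subsetP=> B.
case/imsetP=> v _ ->; have := fP v; case/andP=> /andP[c1 HB] _.
rewrite inE HB /=; apply/eqP.
by rewrite -[RHS]rr; apply/esym/(fingraph.rootP Ksym).
Qed.

Lemma main_count (Hc : connected_graph e) : kappa e * #|T| <= alpha e.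
Proof.
set P := [set A | acyc A].
set R := [set A | fingraph.roots K A && acyc A].
have kR : kappa e = #|R|.
  by rewrite /kappa /n_comp_mem; apply: eq_card => A; rewrite !inE.
have PR : forall A, A \in P -> fingraph.root K A \in R.
  move=> A; rewrite !inE => HA; rewrite fingraph.roots_root //=; last exact: Ksym.
  exact: connect_acyc (fingraph.connect_root _ _) HA.
have E : #|P| = \sum_(r in R) #|[set A | acyc A & fingraph.root K A == r]|.
  rewrite -sum1_card (partition_big (fingraph.root K) (mem R)) //=.
  by apply: eq_bigr => r _; rewrite -sum1_card; apply: eq_bigl => A; rewrite !inE.
rewrite kR /alpha -/P E -sum_nat_const; apply: leq_sum => r.
rewrite inE => /andP[rr Hr]; apply: (fiber_big Hc Hr); exact/eqP.
Qed.

End Pf.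

Local Open Scope ring_scope.

Theorem proposition4 (T : finType) (e : rel T) :
  simple_graph e -> connected_graph e ->
  (kappa e)%:R <= (#|T|%:R)^-1 * (alpha e)%:R :> rat.
Proof.
move=> Hs Hc; have n0 : (0 < #|T|)%N := Hc.1.
rewrite ler_pdivlMl ?ltr0n // -natrM ler_nat mulnC.
exact: main_count.
Qed.
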